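(* Let $q\neq0$ and $r$ be real numbers. As formal power series in $t$, \[ \sum_{n=0}^{\infty} \hat c_n^q(r)\,\frac{t^n}{n!}=\frac{q\,(1+qt)^{r/q}}{\ln(1+qt)}\Big(1-(1+qt)^{-1/q}\Big). \] In particular, for $r=0$, \[ \sum_{n=0}^{\infty} \hat c_n^q(0)\,\frac{t^n}{n!}=\frac{q}{\ln(1+qt)}\Big(1-(1+qt)^{-1/q}\Big). \]
   Context: For a real number $q\neq 0$ and an integer $n\ge0$, write $(y|q)_n=\prod_{j=0}^{n-1}(y-jq)$, with $(y|q)_0=1$. The Cauchy polynomials with a $q$ parameter of the second kind are $\hat c_n^q(z)=\int_0^1 (-x+z|q)_n\,dx$. In the formula, $(1+qt)^{a}=\exp(a\ln(1+qt))$ with $\ln(1+qt)=\sum_{m\ge1}(-1)^{m-1}(qt)^m/m$. The right-hand side is a formal power series, since $\big(1-(1+qt)^{-1/q}\big)/\ln(1+qt)$ is one. *)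

(* Defs.v *)
From Stdlib Require Import Reals Lra List Factorial.
Import ListNotations.
Open Scope R_scope.

(* Generalized falling factorial (y|q)_n = prod_{j=0}^{n-1} (y - j q). *)
Fixpoint gfact (y q : R) (n : nat) : R :=
  match n with
  | O => 1
  | S m => gfact y q m * (y - INR m * q)
  end.

Lemma gfact_integrable (q z : R) (n : nat) :
  Riemann_integrable (fun x => gfact (- x + z) q n) 0 1.
Proof.
  apply continuity_implies_RiemannInt; [lra|].
  intros x _. revert x. change (continuity (fun x => gfact (- x + z) q n)).
  induction n as [|n IH]; simpl.
  - apply continuity_const. intros a b; reflexivity.
  - apply continuity_mult; [exact IH|].
    apply continuity_minus.
    + apply continuity_plus.
      * apply continuity_opp, derivable_continuous, derivable_id.
      * apply continuity_const. intros a b; reflexivity.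
    + apply continuity_const. intros a b; reflexivity.
Qed.

(* Cauchy polynomials with a q parameter of the second kind:
   hat c_n^q(z) = int_0^1 (-x+z|q)_n dx. *)
Definition chat (q : R) (n : nat) (z : R) : R :=
  RiemannInt (gfact_integrable q z n).

Definition fps := nat -> R.

Definition fps_one : fps := fun n => match n with O => 1 | _ => 0 end.
Definition fps_add (A B : fps) : fps := fun n => A n + B n.
Definition fps_opp (A : fps) : fps := fun n => - A n.
Definition fps_scale (c : R) (A : fps) : fps := fun n => c * A n.
Definition fps_mul (A B : fps) : fps :=
  fun n => sum_f_R0 (fun k => A k * B (n - k)%nat) n.
Fixpoint fps_pow (A : fps) (k : nat) : fps :=
  match k with O => fps_one | S j => fps_mul A (fps_pow A j) end.

(* Formal exponential of a series with zero constant term: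
   exp(S) = sum_k S^k / k!; only k <= n contributes to coefficient n. *)
Definition fps_exp (S : fps) : fps :=
  fun n => sum_f_R0 (fun k => fps_pow S k n / INR (fact k)) n.

Fixpoint fps_inv_aux (A : fps) (n : nat) : list R :=
  match n with
  | O => [/ A O]
  | S m => let l := fps_inv_aux A m in
           l ++ [ - / A O * sum_f_R0 (fun j => A (S j) * nth (m - j) l 0) m ]
  end.
Definition fps_inv (A : fps) : fps := fun n => nth n (fps_inv_aux A n) 0.

(* Shift: A / t, for A with zero constant term. *)
Definition fps_shift (A : fps) : fps := fun n => A (S n).

(* Quotient A / B of series with A_0 = B_0 = 0 and B_1 <> 0:
   (A/t) * (B/t)^{-1}. *)
Definition fps_div (A B : fps) : fps := fps_mul (fps_shift A) (fps_inv (fps_shift B)).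

Definition fps_ln1p (q : R) : fps :=
  fun m => match m with O => 0 | S k => (-1) ^ k * q ^ m / INR m end.

Definition fps_powr (q a : R) : fps := fps_exp (fps_scale a (fps_ln1p q)).

Definition egf_chat (q r : R) : fps := fun n => chat q n r / INR (fact n).

(* Main.v *)
Require Import Defs.
From Stdlib Require Import Reals Lra Lia List Factorial FunctionalExtensionality.
From Coquelicot Require Import Coquelicot.
Open Scope R_scope.

Lemma sum_rev f N : sum_f_R0 (fun k => f (N - k)%nat) N = sum_f_R0 f N.
Proof.
  induction N as [|N IH]; [reflexivity|].
  rewrite decomp_sum by lia. rewrite tech5. simpl pred.
  replace (S N - 0)%nat with (S N) by lia.
  rewrite <- IH. 
  assert (H: sum_f_R0 (fun i => f (S N - S i)%nat) N = sum_f_R0 (fun k => f (N - k)%nat) N)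
    by (apply sum_eq; intros; f_equal).
  rewrite H. ring.
Qed.

Lemma sum_triangle (f : nat -> nat -> R) n :
  sum_f_R0 (fun i => sum_f_R0 (fun j => f i j) i) n =
  sum_f_R0 (fun j => sum_f_R0 (fun k => f (j + k)%nat j) (n - j)) n.
Proof.
  induction n as [|n IH]; [simpl; f_equal|].
  rewrite tech5, IH, (tech5 (fun j => sum_f_R0 (fun k => f (j + k)%nat j) (S n - j))).
  assert (H: sum_f_R0 (fun j => sum_f_R0 (fun k => f (j + k)%nat j) (S n - j)) n
     = sum_f_R0 (fun j => sum_f_R0 (fun k => f (j + k)%nat j) (n - j) + f (S n) j) n).
  { apply sum_eq; intros j Hj. replace (S n - j)%nat with (S (n - j)) by lia.
    rewrite tech5. f_equal. f_equal. lia. }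
  rewrite H, plus_sum. replace (S n - S n)%nat with 0%nat by lia. simpl (sum_f_R0 _ 0).
  replace (S n + 0)%nat with (S n) by lia. change (fun j => f (S n) j) with (f (S n)). rewrite tech5, Nat.add_0_r. ring.
Qed.

Lemma sum_swap (f : nat -> nat -> R) n m :
  sum_f_R0 (fun i => sum_f_R0 (fun j => f i j) m) n =
  sum_f_R0 (fun j => sum_f_R0 (fun i => f i j) n) m.
Proof.
  induction n as [|n IH]; simpl.
  - reflexivity.
  - rewrite IH, <- plus_sum. reflexivity.
Qed.

Lemma sum_zero_ext f m n : (m <= n)%nat -> (forall i, (m < i <= n)%nat -> f i = 0) ->
  sum_f_R0 f n = sum_f_R0 f m.
Proof.
  intros Hmn H. induction n as [|n IH].
  - replace m with 0%nat by lia. reflexivity.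
  - destruct (Nat.eq_dec m (S n)) as [->|Hne]; [reflexivity|].
    rewrite tech5, IH by (try lia; intros; apply H; lia). rewrite H by lia. ring.
Qed.

Ltac fext := apply functional_extensionality; intro.

Lemma mul_comm A B : fps_mul A B = fps_mul B A.
Proof.
  fext. unfold fps_mul. rewrite <- sum_rev. apply sum_eq; intros i Hi.
  replace (x - (x - i))%nat with i by lia. ring.
Qed.

Lemma mul_assoc A B C : fps_mul (fps_mul A B) C = fps_mul A (fps_mul B C).
Proof.
  fext. unfold fps_mul.
  transitivity (sum_f_R0 (fun i => sum_f_R0 (fun j => A j * B (i - j)%nat * C (x - i)%nat) i) x).
  { apply sum_eq; intros i Hi. rewrite Rmult_comm, scal_sum. apply sum_eq; intros; ring. }
  rewrite sum_triangle. apply sum_eq; intros j Hj.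
  rewrite scal_sum. apply sum_eq; intros k Hk.
  replace (j + k - j)%nat with k by lia. replace (x - (j+k))%nat with (x - j - k)%nat by lia. ring.
Qed.

Lemma one_mul A : fps_mul fps_one A = A.
Proof.
  fext. unfold fps_mul. destruct x.
  - simpl. ring.
  - rewrite decomp_sum by lia. simpl. rewrite sum_eq with (Bn := fun _ => 0).
    + rewrite sum_cte. replace (x - 0)%nat with x by lia. ring.
    + intros; ring.
Qed.

Lemma mul_one A : fps_mul A fps_one = A.
Proof. rewrite mul_comm; apply one_mul. Qed.

Lemma mul_add_l A B C : fps_mul (fps_add A B) C = fps_add (fps_mul A C) (fps_mul B C).
Proof. fext. unfold fps_mul, fps_add. rewrite <- plus_sum. apply sum_eq; intros; ring. Qed.

Lemma mul_add_r A B C : fps_mul C (fps_add A B) = fps_add (fps_mul C A) (fps_mul C B).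
Proof. rewrite !(mul_comm C). apply mul_add_l. Qed.

Lemma mul_scale_l c A B : fps_mul (fps_scale c A) B = fps_scale c (fps_mul A B).
Proof. fext. unfold fps_mul, fps_scale. rewrite scal_sum. apply sum_eq; intros; ring. Qed.

Lemma mul_scale_r c A B : fps_mul A (fps_scale c B) = fps_scale c (fps_mul A B).
Proof. rewrite !(mul_comm A). apply mul_scale_l. Qed.

Lemma mul_opp_r A B : fps_mul A (fps_opp B) = fps_opp (fps_mul A B).
Proof. fext. unfold fps_mul, fps_opp. replace (- sum_f_R0 (fun k => A k * B (x - k)%nat) x) with ((-1) * sum_f_R0 (fun k => A k * B (x - k)%nat) x) by ring.
  rewrite scal_sum. apply sum_eq; intros; ring. Qed.

Definition fD (A : fps) : fps := fun n => INR (S n) * A (S n).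
Definition fT (q : R) (A : fps) : fps :=
  fun n => match n with O => A O | S m => A (S m) + q * A m end.

Lemma D_mul A B : fD (fps_mul A B) = fps_add (fps_mul (fD A) B) (fps_mul A (fD B)).
Proof.
  fext. unfold fD, fps_add, fps_mul.
  transitivity (sum_f_R0 (fun k => INR k * A k * B (S x - k)%nat) (S x)
     + sum_f_R0 (fun k => A k * (INR (S x - k) * B (S x - k)%nat)) (S x)).
  { rewrite <- plus_sum, scal_sum. apply sum_eq; intros i Hi.
    rewrite minus_INR by exact Hi. ring. }
  f_equal.
  - rewrite decomp_sum by lia. simpl pred. simpl (INR 0). rewrite Rmult_0_l, Rmult_0_l, Rplus_0_l.
    apply sum_eq; intros; reflexivity.
  - rewrite tech5. rewrite Nat.sub_diag. simpl (INR 0). rewrite Rmult_0_l, Rmult_0_r, Rplus_0_r.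
    apply sum_eq; intros i Hi. replace (S x - i)%nat with (S (x - i)) by lia. reflexivity.
Qed.

Lemma T_mul q A B : fT q (fps_mul A B) = fps_mul (fT q A) B.
Proof.
  fext. unfold fT, fps_mul. destruct x.
  - simpl. ring.
  - rewrite (decomp_sum (fun k => _ * B (S x - k)%nat)) by lia.
    rewrite (decomp_sum (fun k => (match k with O => A O | S m => A (S m) + q * A m end) * B (S x - k)%nat)) by lia.
    simpl pred. rewrite Rplus_assoc. f_equal.
    rewrite scal_sum, <- plus_sum. apply sum_eq; intros i Hi.
    replace (S x - S i)%nat with (x - i)%nat by lia. ring.
Qed.

Lemma TD_eq q Z n : fT q (fD Z) n = INR (S n) * Z (S n) + q * INR n * Z n.
Proof. destruct n; unfold fT, fD; simpl (INR 0); [ring|]. ring. Qed.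

Lemma T_add q A B : fT q (fps_add A B) = fps_add (fT q A) (fT q B).
Proof. fext. unfold fT, fps_add. destruct x; ring. Qed.
Lemma T_scale q c A : fT q (fps_scale c A) = fps_scale c (fT q A).
Proof. fext. unfold fT, fps_scale. destruct x; ring. Qed.

Lemma shift_mul X B : B O = 0 -> fps_mul X (fps_shift B) = fps_shift (fps_mul X B).
Proof.
  intro HB. fext. unfold fps_mul, fps_shift. rewrite tech5, Nat.sub_diag, HB, Rmult_0_r, Rplus_0_r.
  apply sum_eq; intros i Hi. replace (S x - i)%nat with (S (x - i)) by lia. reflexivity.
Qed.

Lemma inv_aux_len A n : length (fps_inv_aux A n) = S n.
Proof. induction n; simpl; [reflexivity|]. rewrite length_app, IHn. simpl. lia. Qed.

Lemma inv_aux_prefix A n k : (k <= n)%nat -> nth k (fps_inv_aux A n) 0 = fps_inv A k.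
Proof.
  unfold fps_inv. induction n as [|n IH]; intros Hk.
  - replace k with 0%nat by lia. reflexivity.
  - destruct (Nat.eq_dec k (S n)) as [->|Hne]; [reflexivity|].
    simpl fps_inv_aux. rewrite app_nth1 by (rewrite inv_aux_len; lia). apply IH; lia.
Qed.

Lemma inv_S A m : fps_inv A (S m) =
  - / A O * sum_f_R0 (fun j => A (S j) * fps_inv A (m - j)%nat) m.
Proof.
  unfold fps_inv at 1. simpl fps_inv_aux. rewrite app_nth2 by (rewrite inv_aux_len; lia).
  rewrite inv_aux_len, Nat.sub_diag. simpl. f_equal. apply sum_eq; intros j Hj.
  rewrite inv_aux_prefix by lia. reflexivity.
Qed.

Lemma mul_inv A : A O <> 0 -> fps_mul A (fps_inv A) = fps_one.
Proof.
  intro H. fext. unfold fps_mul. destruct x.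
  - simpl. unfold fps_inv. simpl. field. exact H.
  - rewrite decomp_sum by lia. simpl pred. rewrite Nat.sub_0_r, inv_S. simpl.
    replace (sum_f_R0 (fun i => A (S i) * fps_inv A (x - i)%nat) x)
      with (sum_f_R0 (fun j => A (S j) * fps_inv A (x - j)%nat) x) by reflexivity.
    field. exact H.
Qed.

Lemma mul_cancel X Y B : B O <> 0 -> fps_mul X B = fps_mul Y B -> X = Y.
Proof.
  intros HB H.
  rewrite <- (mul_one X), <- (mul_one Y), <- (mul_inv B HB), <- !mul_assoc, H. reflexivity.
Qed.

Definition E (q c : R) : fps := fun n => gfact c q n / INR (fact n).

Lemma INR_fact_S n : INR (fact (S n)) = INR (S n) * INR (fact n).
Proof. change (fact (S n)) with (S n * fact n)%nat. apply mult_INR. Qed.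

Lemma ode_unique q F c Z1 Z2 : Z1 O = Z2 O ->
  (forall n, fT q (fD Z1) n = F n + c * Z1 n) ->
  (forall n, fT q (fD Z2) n = F n + c * Z2 n) -> Z1 = Z2.
Proof.
  intros H0 H1 H2. fext. induction x as [|n IH]; [exact H0|].
  specialize (H1 n); specialize (H2 n). rewrite TD_eq in H1, H2.
  assert (HS: INR (S n) <> 0) by (apply not_0_INR; lia).
  apply (Rmult_eq_reg_l (INR (S n))); [|exact HS].
  rewrite IH in H1. lra.
Qed.

Lemma E_ode q c n : fT q (fD (E q c)) n = 0 + c * E q c n.
Proof.
  rewrite TD_eq. unfold E. rewrite INR_fact_S. simpl gfact.
  assert (HS: INR (S n) <> 0) by (apply not_0_INR; lia).
  assert (HF := INR_fact_neq_0 n). field. split; assumption.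
Qed.

Lemma E_0 q c : E q c O = 1.
Proof. unfold E. simpl. field. Qed.

Lemma mul_zero_r A : fps_mul A (fun _ => 0) = (fun _ => 0).
Proof. fext. unfold fps_mul. rewrite sum_eq with (Bn := fun _ => 0) by (intros; ring).
  rewrite sum_cte. ring. Qed.

Lemma T_D_mul_E q c d :
  fT q (fD (fps_mul (E q c) (E q d))) = fps_scale (c + d) (fps_mul (E q c) (E q d)).
Proof.
  rewrite D_mul, T_add, (mul_comm (E q c) (fD (E q d))), !T_mul.
  assert (Hc: fT q (fD (E q c)) = fps_scale c (E q c)) by (fext; rewrite E_ode; unfold fps_scale; ring).
  assert (Hd: fT q (fD (E q d)) = fps_scale d (E q d)) by (fext; rewrite E_ode; unfold fps_scale; ring).
  rewrite Hc, Hd, !mul_scale_l, (mul_comm (E q d)). fext. unfold fps_add, fps_scale. ring.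
Qed.

Lemma E_mul q c d : fps_mul (E q c) (E q d) = E q (c + d).
Proof.
  apply (ode_unique q (fun _ => 0) (c + d)).
  - unfold fps_mul. simpl. rewrite !E_0. ring.
  - intro n. rewrite T_D_mul_E. unfold fps_scale. ring.
  - apply E_ode.
Qed.

Lemma E_zero q : E q 0 = fps_one.
Proof.
  assert (H: forall n, gfact 0 q (S n) = 0).
  { induction n; simpl in *; [ring|]. rewrite IHn. ring. }
  fext. destruct x; [apply E_0|]. unfold E. rewrite H. simpl. unfold Rdiv. ring.
Qed.

Lemma pow_vanish G : G O = 0 -> forall k m, (m < k)%nat -> fps_pow G k m = 0.
Proof.
  intros H0 k. induction k as [|k IH]; intros m Hm; [lia|].
  simpl. unfold fps_mul. rewrite sum_eq with (Bn := fun _ => 0).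
  - rewrite sum_cte. ring.
  - intros i Hi. destruct i; [rewrite H0; ring|]. rewrite IH by lia. ring.
Qed.

Lemma D_pow G k : fD (fps_pow G (S k)) = fps_scale (INR (S k)) (fps_mul (fD G) (fps_pow G k)).
Proof.
  induction k as [|k IH].
  - change (fps_pow G 1) with (fps_mul G fps_one). rewrite D_mul.
    assert (H1: fD fps_one = fun _ => 0) by (fext; unfold fD; simpl; ring).
    rewrite H1, mul_zero_r. fext. unfold fps_add, fps_scale. simpl. ring.
  - change (fps_pow G (S (S k))) with (fps_mul G (fps_pow G (S k))).
    rewrite D_mul, IH, mul_scale_r, <- mul_assoc, (mul_comm G (fD G)), mul_assoc.
    change (fps_mul G (fps_pow G k)) with (fps_pow G (S k)).
    fext. unfold fps_add, fps_scale. rewrite (S_INR (S k)). ring.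
Qed.

Lemma D_exp G : G O = 0 -> fD (fps_exp G) = fps_mul (fD G) (fps_exp G).
Proof.
  intro H0. fext. unfold fps_exp.
  transitivity (sum_f_R0 (fun j => fps_mul (fD G) (fps_pow G j) x / INR (fact j)) x).
  { unfold fD at 1. rewrite scal_sum. rewrite decomp_sum by lia. simpl pred.
    change (fps_pow G 0 (S x)) with 0. unfold Rdiv. rewrite Rmult_0_l, Rmult_0_l, Rplus_0_l.
    apply sum_eq; intros j Hj.
    assert (E1 := f_equal (fun f => f x) (D_pow G j)). cbv beta in E1. unfold fD, fps_scale in E1.
    rewrite INR_fact_S.
    assert (HS: INR (S j) <> 0) by (apply not_0_INR; lia).
    assert (HF := INR_fact_neq_0 j).
    replace (fps_pow G (S j) (S x) * / (INR (S j) * INR (fact j)) * INR (S x))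
      with ((INR (S x) * fps_pow G (S j) (S x)) / (INR (S j) * INR (fact j))) by (field; auto).
    rewrite E1. change (fun n : nat => INR (S n) * G (S n)) with (fD G). field. auto. }
  unfold fps_mul at 2.
  transitivity (sum_f_R0 (fun i => sum_f_R0 (fun j => fD G i * (fps_pow G j (x - i)%nat / INR (fact j))) x) x).
  { rewrite sum_swap. apply sum_eq; intros j Hj. unfold fps_mul, Rdiv. rewrite Rmult_comm, scal_sum.
    apply sum_eq; intros; ring. }
  apply sum_eq; intros i Hi. rewrite scal_sum.
  rewrite (sum_zero_ext (fun j => fD G i * (fps_pow G j (x - i)%nat / INR (fact j))) (x - i) x); [apply sum_eq; intros; ring|lia|]. intros j Hj. rewrite (pow_vanish G H0) by lia. unfold Rdiv; ring.
Qed.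

Lemma D_scale c A : fD (fps_scale c A) = fps_scale c (fD A).
Proof. fext. unfold fD, fps_scale. ring. Qed.

Lemma TD_ln q a n : fT q (fD (fps_scale a (fps_ln1p q))) n = (a * q) * fps_one n.
Proof.
  unfold fT, fD, fps_scale, fps_ln1p. destruct n.
  - simpl. field.
  - assert (H1: INR (S (S n)) <> 0) by (apply not_0_INR; lia).
    assert (H2: INR (S n) <> 0) by (apply not_0_INR; lia).
    simpl fps_one. simpl pow. field. auto.
Qed.

Lemma powr_E q a : fps_powr q a = E q (a * q).
Proof.
  apply (ode_unique q (fun _ => 0) (a * q)).
  - unfold fps_powr, fps_exp. rewrite E_0. simpl. field.
  - intro n. unfold fps_powr. rewrite D_exp by (unfold fps_scale, fps_ln1p; ring).
    rewrite T_mul.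
    assert (H: fT q (fD (fps_scale a (fps_ln1p q))) = fps_scale (a * q) fps_one)
      by (fext; rewrite TD_ln; reflexivity).
    rewrite H, mul_scale_l, one_mul. unfold fps_scale. ring.
  - apply E_ode.
Qed.

Fixpoint gd (y q : R) (n : nat) : R :=
  match n with O => 0 | S m => gd y q m * (y - INR m * q) + gfact y q m end.

Definition dE (q y : R) : fps := fun n => gd y q n / INR (fact n).

Lemma dE_ode q y n : fT q (fD (dE q y)) n = E q y n + y * dE q y n.
Proof.
  rewrite TD_eq. unfold E, dE. rewrite INR_fact_S. simpl gd.
  assert (HS: INR (S n) <> 0) by (apply not_0_INR; lia).
  assert (HF := INR_fact_neq_0 n). field. split; assumption.
Qed.

Lemma ln_E q y : fps_mul (fps_ln1p q) (E q y) = fps_scale q (dE q y).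
Proof.
  apply (ode_unique q (fps_scale q (E q y)) y).
  - unfold fps_mul, fps_scale, dE, fps_ln1p. simpl. field.
  - intro n. rewrite D_mul, T_add, (mul_comm (fps_ln1p q) (fD (E q y))), !T_mul.
    assert (H: fT q (fD (fps_ln1p q)) = fps_scale q fps_one).
    { replace (fps_ln1p q) with (fps_scale 1 (fps_ln1p q)) by (fext; unfold fps_scale; ring).
      fext. rewrite TD_ln. unfold fps_scale. ring. }
    assert (Hc: fT q (fD (E q y)) = fps_scale y (E q y)) by (fext; rewrite E_ode; unfold fps_scale; ring).
    rewrite H, Hc, !mul_scale_l, one_mul, (mul_comm (E q y)). unfold fps_add, fps_scale. ring.
  - intro n. rewrite D_scale, T_scale. unfold fps_scale. rewrite dE_ode. ring.
Qed.

Lemma is_derive_val (f : R -> R) x l l' : is_derive f x l -> l = l' -> is_derive f x l'.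
Proof. intros H ->. exact H. Qed.

Lemma gfact_derive q n y : is_derive (fun y => gfact y q n) y (gd y q n).
Proof.
  induction n as [|m IH].
  - simpl. apply (is_derive_const 1 y).
  - simpl. eapply is_derive_val.
    + apply (is_derive_mult (fun y => gfact y q m) (fun y => y - INR m * q)); [exact IH| |].
      * auto_derive; [exact I|reflexivity].
      * intros; apply Rmult_comm.
    + unfold plus, mult; simpl. ring.
Qed.

Lemma gd_cont q n y : continuous (fun y => gd y q n) y.
Proof.
  induction n as [|m IH]; simpl.
  - apply continuous_const.
  - apply (continuous_plus (fun y => gd y q m * (y - INR m * q)) (fun y => gfact y q m)).
    + apply (continuous_mult (fun y => gd y q m) (fun y => y - INR m * q)); [exact IH|].
      apply (@ex_derive_continuous R_AbsRing R_NormedModule). auto_derive. exact I.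
    + apply (@ex_derive_continuous R_AbsRing R_NormedModule). eexists. apply gfact_derive.
Qed.

Lemma is_RInt_sum (f : nat -> R -> R) (I : nat -> R) a b M :
  (forall k, is_RInt (f k) a b (I k)) ->
  is_RInt (fun x => sum_f_R0 (fun k => f k x) M) a b (sum_f_R0 I M).
Proof.
  intro H. induction M as [|M IH]; [exact (H 0%nat)|].
  simpl. apply (@is_RInt_plus R_NormedModule _ _ a b _ _ IH (H (S M))).
Qed.

Lemma chat_is_RInt q k r : is_RInt (fun x => gfact (- x + r) q k) 0 1 (chat q k r).
Proof.
  unfold chat. rewrite <- RInt_Reals. apply (@RInt_correct R_CompleteNormedModule). apply ex_RInt_Reals_1. apply gfact_integrable.
Qed.

Lemma egf_L q r : fps_mul (egf_chat q r) (fps_ln1p q) =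
  fps_scale q (fps_add (E q r) (fps_opp (E q (r + -1)))).
Proof.
  fext. rename x into N. unfold fps_mul, egf_chat, fps_scale, fps_add, fps_opp.
  assert (HF := INR_fact_neq_0 N).
  set (g := fun k x => gfact (- x + r) q k / INR (fact k) * fps_ln1p q (N - k)%nat).
  assert (H1 : is_RInt (fun x => sum_f_R0 (fun k => g k x) N) 0 1
                 (sum_f_R0 (fun k => chat q k r / INR (fact k) * fps_ln1p q (N - k)%nat) N)).
  { apply is_RInt_sum. intro k. unfold g.
    apply (@is_RInt_ext R_NormedModule (fun x => scal (/ INR (fact k) * fps_ln1p q (N - k)%nat) (gfact (- x + r) q k))).
    { intros x _. unfold scal; simpl; unfold mult; simpl. field. apply INR_fact_neq_0. }
    replace (chat q k r / INR (fact k) * fps_ln1p q (N - k)%nat) with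
      (scal (/ INR (fact k) * fps_ln1p q (N - k)%nat) (chat q k r))
      by (unfold scal; simpl; unfold mult; simpl; field; apply INR_fact_neq_0).
    apply (@is_RInt_scal R_NormedModule). apply chat_is_RInt. }
  assert (Hint : forall x, sum_f_R0 (fun k => g k x) N = q * (gd (- x + r) q N / INR (fact N))).
  { intro x. assert (Hl := f_equal (fun f => f N) (ln_E q (- x + r))). cbv beta in Hl.
    rewrite (mul_comm (fps_ln1p q)) in Hl. unfold fps_mul, fps_scale, dE in Hl. rewrite <- Hl.
    apply sum_eq; intros; reflexivity. }
  assert (H2 : is_RInt (fun x => q * (gd (- x + r) q N / INR (fact N))) 0 1
     (minus ((fun x => - (q / INR (fact N)) * gfact (- x + r) q N) 1)
            ((fun x => - (q / INR (fact N)) * gfact (- x + r) q N) 0))).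
  { apply (@is_RInt_derive R_CompleteNormedModule (fun x => - (q / INR (fact N)) * gfact (- x + r) q N) (fun x => q * (gd (- x + r) q N / INR (fact N)))).
    - intros x _. apply (is_derive_val _ _ (- (q / INR (fact N)) * (-1 * gd (- x + r) q N))).
      + apply is_derive_scal.
        apply (is_derive_comp (fun y => gfact y q N) (fun x => - x + r)).
        * apply gfact_derive.
        * apply (is_derive_val _ _ (-1)); [auto_derive; [exact I|ring]|reflexivity].
      + change (- (q / INR (fact N)) * (-1 * gd (- x + r) q N) = q * (gd (- x + r) q N / INR (fact N))). field; auto.
    - intros x _.
      apply (continuous_mult (fun _ => q) (fun x => gd (- x + r) q N / INR (fact N))).
      + apply continuous_const.
      + apply (continuous_mult (fun x => gd (- x + r) q N) (fun _ => / INR (fact N))).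
        * apply (continuous_comp (fun x => - x + r) (fun y => gd y q N)).
          -- apply (@ex_derive_continuous R_AbsRing R_NormedModule). auto_derive. exact I.
          -- apply gd_cont.
        * apply continuous_const. }
  apply is_RInt_ext with (g := fun x => sum_f_R0 (fun k => g k x) N) in H2.
  2: { intros x _. symmetry. apply Hint. }
  apply (@is_RInt_unique R_CompleteNormedModule) in H1. apply (@is_RInt_unique R_CompleteNormedModule) in H2.
  rewrite H1 in H2. rewrite H2. unfold minus, plus, opp; simpl. unfold E.
  replace (- (1) + r) with (r + -1) by ring. replace (- 0 + r) with r by ring. field. exact HF.
Qed.

Lemma main1 (q r : R) (hq : q <> 0) :
  egf_chat q r =
    fps_scale q
      (fps_mul (fps_powr q (r / q))
         (fps_div (fps_add fps_one (fps_opp (fps_powr q (- (1 / q)))))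
                  (fps_ln1p q))).
Proof.
  set (L := fps_ln1p q). set (B := fps_shift L).
  assert (HL0 : L O = 0) by (unfold L, fps_ln1p; reflexivity).
  assert (HB0 : B O <> 0) by (unfold B, L, fps_shift, fps_ln1p; simpl; replace (1 * (q * 1) / 1) with q by field; exact hq).
  rewrite (powr_E q (r / q)), (powr_E q (- (1 / q))).
  replace (r / q * q) with r by (field; exact hq).
  replace (- (1 / q) * q) with (-1) by (field; exact hq).
  set (A := fps_add fps_one (fps_opp (E q (-1)))).
  assert (HA0 : A O = 0) by (unfold A, fps_add, fps_opp; rewrite E_0; simpl; ring).
  apply (mul_cancel _ _ B HB0).
  unfold B. rewrite shift_mul by exact HL0. rewrite egf_L.
  rewrite mul_scale_l, mul_assoc. unfold fps_div. fold L.
  rewrite mul_assoc, (mul_comm (fps_inv (fps_shift L))), mul_inv by exact HB0.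
  rewrite mul_one, shift_mul by exact HA0.
  unfold A. rewrite mul_add_r, mul_opp_r, mul_one, E_mul.
  fext. unfold fps_scale, fps_shift, fps_add, fps_opp. reflexivity.
Qed.

Theorem mainTheorem4 (q r : R) (hq : q <> 0) :
  egf_chat q r =
    fps_scale q
      (fps_mul (fps_powr q (r / q))
         (fps_div (fps_add fps_one (fps_opp (fps_powr q (- (1 / q)))))
                  (fps_ln1p q)))
  /\
  egf_chat q 0 =
    fps_scale q
      (fps_div (fps_add fps_one (fps_opp (fps_powr q (- (1 / q)))))
               (fps_ln1p q)).
Proof.
  split; [apply main1; exact hq|].
  rewrite (main1 q 0 hq), powr_E.
  replace (0 / q * q) with 0 by (field; exact hq).
  rewrite E_zero, one_mul. reflexivity.
Qed.
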